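(* Let $Q$ be a right Leibniz algebra over $\mathbb{F}$, $L$ a subalgebra of $Q$, and $q\in Q$. Then $(L:q)$ is an ideal of $L$. Moreover, it is maximal among the ideals $I$ of $L$ such that $[I,q]\subseteq L$ and $[q,I]\subseteq L$, in the sense that every ideal $I$ of $L$ with $[I,q]\subseteq L$ and $[q,I]\subseteq L$ is contained in $(L:q)$.
   Context: A right Leibniz algebra satisfies $[x,[y,z]]=[[x,y],z]-[[x,z],y]$. Ideals of $L$: subspaces $I$ with $[I,L]\subseteq I$, $[L,I]\subseteq I$. For $x\in L$ let $R_x(u)=[u,x]$, $L_x(u)=[x,u]$ as operators on $Q$, and $\mathscr{A}(L)$ the associative algebra generated by $\{R_x,L_y:x,y\in L\}$. ${}_L(q)=\mathbb{F}q+\{\sum_{i=1}^n\xi_i(q):\xi_i\in\mathscr{A}(L),n\in\mathbb{N}\}$, and $(L:q)=\{x\in L:[x,{}_L(q)]\subseteq L,\ [{}_L(q),x]\subseteq L\}$. *)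

(* Defs.v *)
From HB Require Import structures.
From mathcomp Require Import all_boot all_order all_algebra.
Set Implicit Arguments. Unset Strict Implicit. Unset Printing Implicit Defensive.
Import GRing.Theory.
Local Open Scope ring_scope.

Section LeibnizDefs.
Variables (F : fieldType) (Q : lmodType F) (br : Q -> Q -> Q).

Definition bilinear_bracket : Prop :=
  (forall (a : F) (x y z : Q), br (a *: x + y) z = a *: br x z + br y z) /\
  (forall (a : F) (x y z : Q), br z (a *: x + y) = a *: br z x + br z y).

Definition right_leibniz : Prop :=
  forall x y z : Q, br x (br y z) = br (br x y) z - br (br x z) y.

Definition subspace (S : Q -> Prop) : Prop :=
  S 0 /\ forall (a : F) (x y : Q), S x -> S y -> S (a *: x + y).

Definition subalgebra (L : Q -> Prop) : Prop :=
  subspace L /\ forall x y, L x -> L y -> L (br x y).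

Definition ideal_of (L I : Q -> Prop) : Prop :=
  subspace I /\ (forall x, I x -> L x) /\
  (forall x y, I x -> L y -> I (br x y)) /\
  (forall x y, L x -> I y -> I (br x y)).

(* membership in the associative algebra A(L) generated (as an algebra of
   operators on Q) by the R_x : u |-> [u,x] and L_y : u |-> [y,u], x,y in L *)
Inductive inAL (L : Q -> Prop) : (Q -> Q) -> Prop :=
| AL_R x : L x -> inAL L (fun u => br u x)
| AL_L y : L y -> inAL L (fun u => br y u)
| AL_add f g : inAL L f -> inAL L g -> inAL L (fun u => f u + g u)
| AL_scale (a : F) f : inAL L f -> inAL L (fun u => a *: f u)
| AL_comp f g : inAL L f -> inAL L g -> inAL L (fun u => f (g u)).

Definition genL (L : Q -> Prop) (q : Q) (u : Q) : Prop :=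
  exists (a : F) (n : nat) (xi : 'I_n -> Q -> Q),
    (forall i, inAL L (xi i)) /\ u = a *: q + \sum_(i < n) xi i q.

Definition colon (L : Q -> Prop) (q : Q) (x : Q) : Prop :=
  L x /\ forall u, genL L q u -> L (br x u) /\ L (br u x).

End LeibnizDefs.

(* Main.v *)
Require Import Defs.
From HB Require Import structures.
From mathcomp Require Import all_boot all_order all_algebra.
Import GRing.Theory.
Local Open Scope ring_scope.
Set Implicit Arguments.

Lemma br0l (F : fieldType) (Q : lmodType F) (br : Q -> Q -> Q)
  (Hb : bilinear_bracket br) z : br 0 z = 0.
Proof.
have h := Hb.1 1 0 0 z; rewrite !scale1r addr0 in h.
by have := congr1 (fun t => t - br 0 z) h; rewrite /= subrr addrK => <-.
Qed.

Lemma br0r (F : fieldType) (Q : lmodType F) (br : Q -> Q -> Q)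
  (Hb : bilinear_bracket br) z : br z 0 = 0.
Proof.
have h := Hb.2 1 0 0 z; rewrite !scale1r addr0 in h.
by have := congr1 (fun t => t - br z 0) h; rewrite /= subrr addrK => <-.
Qed.

Lemma subD (F : fieldType) (Q : lmodType F) (S : Q -> Prop)
  (HS : subspace S) x y : S x -> S y -> S (x + y).
Proof. by move=> *; rewrite -[x]scale1r; apply: HS.2. Qed.

Lemma subZ (F : fieldType) (Q : lmodType F) (S : Q -> Prop)
  (HS : subspace S) a x : S x -> S (a *: x).
Proof. by move=> *; rewrite -[_ *: x]addr0; apply: HS.2 => //; exact: HS.1. Qed.

Lemma subB (F : fieldType) (Q : lmodType F) (S : Q -> Prop)
  (HS : subspace S) x y : S x -> S y -> S (x - y).
Proof. by move=> *; rewrite addrC -scaleN1r; apply: HS.2. Qed.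

Lemma subSum (F : fieldType) (Q : lmodType F) (S : Q -> Prop)
  (HS : subspace S) n (f : 'I_n -> Q) : (forall i, S (f i)) -> S (\sum_(i < n) f i).
Proof.
move=> H; apply: (big_ind S) => //; [exact: HS.1 | exact: subD].
Qed.

Lemma inAL_lin (F : fieldType) (Q : lmodType F) (br : Q -> Q -> Q)
  (Hb : bilinear_bracket br) L f : inAL br L f ->
  forall a x y, f (a *: x + y) = a *: f x + f y.
Proof.
elim=> {f} [x Lx|y Ly|f g _ IHf _ IHg|b f _ IHf|f g _ IHf _ IHg] a u v /=.
- exact: Hb.1.
- exact: Hb.2.
- by rewrite IHf IHg scalerDr addrACA.
- by rewrite IHf scalerDr !scalerA mulrC.
- by rewrite IHg IHf.
Qed.

Lemma inAL0 (F : fieldType) (Q : lmodType F) (br : Q -> Q -> Q)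
  (Hb : bilinear_bracket br) L f : inAL br L f -> f 0 = 0.
Proof.
move=> H; have h := inAL_lin Hb H 1 0 0; rewrite !scale1r addr0 in h.
by have := congr1 (fun t => t - f 0) h; rewrite /= subrr addrK => <-.
Qed.

Lemma genL_inAL (F : fieldType) (Q : lmodType F) (br : Q -> Q -> Q)
  (Hb : bilinear_bracket br) L q xi u :
  inAL br L xi -> genL br L q u -> genL br L q (xi u).
Proof.
move=> Hxi [a [n [f [Hf ->]]]].
exists 0, n.+1, (fun i => match unlift ord0 i with
                          | Some j => fun v => xi (f j v)
                          | None => fun v => a *: xi v end).
split.
  move=> i; case: (unlift ord0 i) => [j|]; first exact: AL_comp.
  exact: AL_scale.
rewrite scale0r add0r big_ord_recl unlift_none.
rewrite (inAL_lin Hb Hxi).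
congr (_ + _).
rewrite (big_morph xi (id1 := 0) (op1 := +%R)).
- by apply: eq_bigr => i _; rewrite liftK.
- by move=> x y; rewrite -[x]scale1r (inAL_lin Hb Hxi) !scale1r.
- by have := inAL0 Hb Hxi.
Qed.

Lemma leibL (F : fieldType) (Q : lmodType F) (br : Q -> Q -> Q)
  (Hleib : right_leibniz br) x y z :
  br (br x y) z = br x (br y z) + br (br x z) y.
Proof. by rewrite Hleib subrK. Qed.

Unset Implicit Arguments.

Theorem proposition3p1 (F : fieldType) (Q : lmodType F) (br : Q -> Q -> Q)
  (Hbil : bilinear_bracket br) (Hleib : right_leibniz br)
  (L : Q -> Prop) (HL : subalgebra br L) (q : Q) :
  ideal_of br L (colon br L q) /\
  (forall I : Q -> Prop, ideal_of br L I ->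
     (forall x, I x -> L (br x q) /\ L (br q x)) ->
     forall x, I x -> colon br L q x).
Proof.
have LS := HL.1; have LB := HL.2.
have GLL : forall y u, L y -> genL br L q u -> genL br L q (br y u).
  by move=> y u Ly; apply: (genL_inAL Hbil (xi := fun v => br y v)); constructor.
have GLR : forall y u, L y -> genL br L q u -> genL br L q (br u y).
  by move=> y u Ly; apply: (genL_inAL Hbil (xi := fun v => br v y)); constructor.
split.
  split; [split|split; [|split]].
  - split; first exact: LS.1.
    by move=> u _; rewrite br0l // br0r //; split; exact: LS.1.
  - move=> a x y [Lx Hx] [Ly Hy]; split; first exact: LS.2.
    move=> u Gu; have [h1 h2] := Hx u Gu; have [h3 h4] := Hy u Gu.
    by rewrite Hbil.1 Hbil.2; split; apply: LS.2.
  - by move=> x [].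
  - move=> x y [Lx Hx] Ly; split; first exact: LB.
    move=> u Gu; split.
      rewrite leibL //; apply: subD => //; first exact: (Hx _ (GLL _ _ Ly Gu)).1.
      by apply: LB => //; exact: (Hx u Gu).1.
    rewrite Hleib; apply: subB => //; first by apply: LB => //; exact: (Hx u Gu).2.
    exact: (Hx _ (GLR _ _ Ly Gu)).2.
  - move=> x y Lx [Ly Hy]; split; first exact: LB.
    move=> u Gu; split.
      rewrite leibL //; apply: subD => //; first by apply: LB => //; exact: (Hy u Gu).1.
      exact: (Hy _ (GLL _ _ Lx Gu)).2.
    rewrite Hleib; apply: subB => //; first exact: (Hy _ (GLR _ _ Lx Gu)).2.
    by apply: LB => //; exact: (Hy u Gu).2.
move=> I [IS [IL [IR1 IR2]]] Hq x0 Ix0; split; first exact: IL.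
pose P v := forall x, I x -> L (br x v) /\ L (br v x).
have P0 : P 0 by move=> x _; rewrite br0l // br0r //; split; exact: LS.1.
have Plin : forall a v w, P v -> P w -> P (a *: v + w).
  move=> a v w Pv Pw x Ix; have [h1 h2] := Pv x Ix; have [h3 h4] := Pw x Ix.
  by rewrite Hbil.1 Hbil.2; split; apply: LS.2.
have PS : subspace P by split.
have Pal : forall xi, inAL br L xi -> forall v, P v -> P (xi v).
  move=> xi; elim=> {xi} [y Ly|y Ly|f g _ IHf _ IHg|b f _ IHf|f g _ IHf _ IHg] v Pv /=.
  - move=> x Ix; split.
      rewrite Hleib; apply: subB => //; first by apply: LB => //; exact: (Pv x Ix).1.
      exact: (Pv _ (IR1 _ _ Ix Ly)).1.
    rewrite leibL //; apply: subD => //; first exact: (Pv _ (IR2 _ _ Ly Ix)).2.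
    by apply: LB => //; exact: (Pv x Ix).2.
  - move=> x Ix; split.
      rewrite Hleib; apply: subB => //; first exact: (Pv _ (IR1 _ _ Ix Ly)).1.
      by apply: LB => //; exact: (Pv x Ix).1.
    rewrite leibL //; apply: subD => //; first by apply: LB => //; exact: (Pv x Ix).2.
    exact: (Pv _ (IR2 _ _ Ly Ix)).1.
  - by apply: (subD PS) => //; [exact: IHf | exact: IHg].
  - by apply: (subZ PS) => //; exact: IHf.
  - by apply: IHf; exact: IHg.
move=> u [a [n [f [Hf ->]]]].
have : P (a *: q + \sum_(i < n) f i q).
  apply: Plin; first by move=> x Ix; exact: Hq.
  by apply: (subSum PS) => // i; apply: Pal => //; move=> x Ix; exact: Hq.
by move/(_ x0 Ix0).
Qed.
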